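(* Let $G(t)\in\mathbb{Z}[t]$ with $\deg G=N$, and suppose $G(t)$ is a product of distinct non-constant polynomials, each irreducible over $\mathbb{Z}$ and of degree at most $3$. If $G(t)$ has a local obstruction at the prime $\ell$, then $\ell\le (N_\ell+2)/2$, where $N_\ell$ is the number of (not necessarily distinct) non-constant linear factors in the factorization of $G(t)$ modulo $\ell$ in $\mathbb{F}_\ell[t]$.
   Context: For $G(t)\in\mathbb{Z}[t]$ and a prime $\ell$, $G$ is said to have a local obstruction at $\ell$ if $G(z)\equiv 0\pmod{\ell^2}$ for every $z\in(\mathbb{Z}/\ell^2\mathbb{Z})^*$. *)

(* Defs.v *)
From HB Require Import structures.
From mathcomp Require Import all_boot all_order all_algebra.
Set Implicit Arguments. Unset Strict Implicit. Unset Printing Implicit Defensive.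
Import Order.TTheory GRing.Theory Num.Theory.
Local Open Scope ring_scope.

(* For a
   non-constant polynomial this means: primitive and irreducible over Q. *)
Definition irreducible_Z (p : {poly int}) : Prop :=
  p != 0 /\ p \isn't a GRing.unit /\
  forall a b : {poly int}, p = a * b -> a \is a GRing.unit \/ b \is a GRing.unit.

(* G has a local obstruction at l : G(z) = 0 mod l^2 for every z in (Z/l^2Z)^*,
   written over representatives z in Z (z is a unit mod l^2 iff coprime to l). *)
Definition local_obstruction (G : {poly int}) (l : nat) : Prop :=
  forall z : int, coprimez z (l%:Z) -> ((l%:Z) ^+ 2 %| G.[z])%Z.

Definition reduce_mod (l : nat) (G : {poly int}) : {poly 'F_l} :=
  map_poly (fun c : int => c%:~R) G.

Definition N_lin (l : nat) (G : {poly int}) : nat :=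
  (\sum_(a : 'F_l) mup a (reduce_mod l G))%N.

(* Main.v *)
Require Import Defs.
From HB Require Import structures.
From mathcomp Require Import all_boot all_order all_algebra.
From mathcomp Require Import zify.
Import Order.TTheory GRing.Theory Num.Theory.
Local Open Scope ring_scope.

Lemma red_nz (l : nat) (f : {poly int}) : prime l -> (1 < size f)%N ->
  irreducible_Z f -> reduce_mod l f != 0.
Proof.
move=> pl sf [nz [nu H]].
have cu : zcontents f \is a GRing.unit.
  have := H (zcontents f)%:P (zprimitive f).
  rewrite mul_polyC -zpolyEprim => /(_ erefl) [].
    by rewrite poly_unitE coefC /= => /andP[].
  by rewrite poly_unitE size_zprimitive => /andP[/eqP sz]; rewrite sz in sf.
apply/negP => /eqP r0.
have : (l%:Z %| zcontents f)%Z.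
  rewrite dvdz_contents; apply/polyOverP => i.
  rewrite (dvdz_pcharf (pchar_Fp pl)).
  by move/polyP: r0 => /(_ i); rewrite /reduce_mod coef_map coef0 /= => ->.
move=> /(dvdz_mulr (zcontents f)^-1); rewrite mulrV //.
rewrite dvdzE /= dvdn1 => /eqP l1; by rewrite l1 in pl.
Qed.
Lemma mult2 (l : nat) (G : {poly int}) (a : 'F_l) : prime l ->
  local_obstruction G l -> reduce_mod l G != 0 -> a != 0 ->
  (2 <= mup a (reduce_mod l G))%N.
Proof.
move=> pl lo nzP a0.
have al : (val a < l)%N by have := ltn_ord a; rewrite [X in (_ < X)%N -> _]Fp_cast.
have a0' : (0 < val a)%N by rewrite lt0n; apply: contra_neq a0 => h; exact: val_inj.
set z : int := (val a)%:Z.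
have za : z%:~R = a :> 'F_l by change ((val a)%:R = a); exact: natr_Zp.
have l0 : (l%:Z)%:~R = 0 :> 'F_l by change (l%:R = 0 :> 'F_l); exact: pchar_Fp_0.
have ndv : ~~ (l %| val a)%N by apply/negP => /(dvdn_leq a0'); rewrite leqNgt al.
have cz : coprimez z l%:Z by change (coprime (val a) l); rewrite coprime_sym prime_coprime.
have czl : coprimez (z + l%:Z) l%:Z.
  by rewrite /coprimez /gcdz -PoszD; change (coprime (val a + l) l); rewrite coprime_sym prime_coprime // dvdn_addl.
have [Q HQ] : exists Q, G - (G.[z])%:P = Q * ('X - z%:P).
  by apply/factor_theorem; rewrite /root !hornerE subrr.
have HG : G = Q * ('X - z%:P) + (G.[z])%:P by rewrite -HQ subrK.
have d1 := lo _ cz; have d2 := lo _ czl.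
have : (l%:Z ^+ 2 %| Q.[z + l%:Z] * l%:Z)%Z.
  have -> : Q.[z + l%:Z] * l%:Z = G.[z + l%:Z] - G.[z].
    by rewrite {1}HG !hornerE addrK addrAC subrr add0r.
  exact: rpredB.
rewrite expr2 mulrC dvdz_mul2l; last by rewrite eqz_nat -lt0n prime_gt0.
rewrite (dvdz_pcharf (pchar_Fp pl)) -horner_map /= rmorphD /= l0 addr0 za => rQ.
have [R HR] : exists R, reduce_mod l Q = R * ('X - a%:P) by apply/factor_theorem.
have HP : reduce_mod l G = R * ('X - a%:P) ^+ 2.
  rewrite {1}HG /reduce_mod rmorphD rmorphM /= map_polyC /= -/(reduce_mod l Q) HR.
  have : (G.[z])%:~R == 0 :> 'F_l by rewrite -(dvdz_pcharf (pchar_Fp pl)) (dvdz_trans _ d1) // dvdz_mull.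
  move/eqP => ->; rewrite addr0 rmorphB /= map_polyX map_polyC /= za.
  by rewrite expr2 mulrA.
by rewrite mup_geq // HP dvdp_mull.
Qed.

Theorem mainTheorem2 (G : {poly int}) (N : nat) (fs : seq {poly int}) (l : nat) :
  (size G).-1 = N ->
  G = \prod_(f <- fs) f ->
  uniq fs ->
  (forall f, f \in fs -> [/\ 1 < size f, size f <= 4 & irreducible_Z f]%N) ->
  prime l ->
  local_obstruction G l ->
  (l%:Q <= ((N_lin l G)%:Q + 2) / 2).
Proof.
move=> _ HG _ Hf pl lo.
have nzP : reduce_mod l G != 0.
  rewrite HG /reduce_mod rmorph_prod /= prodf_seq_neq0; apply/allP => f fin /=.
  by have [s1 _ irr] := Hf f fin; apply: red_nz.
have HN : (2 * (l - 1) <= N_lin l G)%N.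
  rewrite /N_lin (bigD1 0%R) //=.
  apply: leq_trans (leq_addl _ _).
  have H : (\sum_(a : 'F_l | a != 0%R) 2 <= \sum_(a : 'F_l | a != 0%R) mup a (reduce_mod l G))%N.
    by apply: leq_sum => a h; exact: mult2.
  apply: leq_trans H.
  by rewrite sum_nat_const cardC1 card_Fp // mulnC subn1.
have l1 := prime_gt1 pl.
rewrite ler_pdivlMr // -[2%:R]/(2%:R : rat) -natrM -natrD ler_nat.
lia.
Qed.
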